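(* Let $\lambda$ be a partition of $n$ and $\lambda'$ its conjugate. Let $B_\lambda\times 1\subseteq[n]\times[n]$ and $B_{\lambda'}\subseteq[n]\times[n]$ be the Ferrers boards defined in the context. Then the complement $([n]\times[n])\setminus(B_\lambda\times 1)$, rotated by $180^\circ$ (i.e. under the map $(i,j)\mapsto(n+1-i,\,n+1-j)$), equals $B_{\lambda'}$.
   Context: Partitions are drawn as diagrams in French convention (rows counted from bottom to top, row $j$ has $\lambda_j$ left-justified boxes); the box in column $i$ and row $j$ is $(i,j)$ and its content is $c(i,j)=i-j$. For a partition $\lambda$ of $n$, list the contents of its $n$ boxes in weakly decreasing order $c_1\ge c_2\ge\cdots\ge c_n$. The board $B_\lambda\subseteq[n]\times[n]$ (viewed as an $n\times n$ array of squares $(i,j)$, column $i$, row $j$) is the Ferrers board whose $i$-th column consists of the squares $(i,j)$ with $1\le j\le c_i+i-1$ (so column $i$ has height $c_i+i-1$). The board $B_\lambda\times 1$ is obtained by increasing the height of every column by one, i.e. its $i$-th column has height $c_i+i$. *)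

(* Defs.v *)
From mathcomp Require Import all_boot all_order all_algebra.
Set Implicit Arguments. Unset Strict Implicit. Unset Printing Implicit Defensive.
Import Order.TTheory GRing.Theory Num.Theory.

Definition is_partition (n : nat) (l : seq nat) : bool :=
  [&& sorted geq l, all (fun x => 0 < x) l & sumn l == n].

Definition conj_part (l : seq nat) : seq nat :=
  mkseq (fun k => count (fun p => k < p) l) (head 0 l).

(* boxes (i,j) = (column, row), 1-indexed, French convention *)
Definition boxes (l : seq nat) : seq (nat * nat) :=
  flatten [seq [seq (i.+1, j.+1) | i <- iota 0 (nth 0 l j)] | j <- iota 0 (size l)].

Definition content (b : nat * nat) : int := (b.1%:Z - b.2%:Z)%R.

Definition sorted_contents (l : seq nat) : seq int :=
  sort (fun x y : int => (y <= x)%R) [seq content b | b <- boxes l].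

Definition cont (l : seq nat) (i : nat) : int := nth 0%R (sorted_contents l) i.-1.

Definition in_board (n : nat) (l : seq nat) (p : nat * nat) : bool :=
  [&& 1 <= p.1 <= n, 1 <= p.2 <= n & (p.2%:Z <= cont l p.1 + p.1%:Z - 1)%R].

Definition in_board_x1 (n : nat) (l : seq nat) (p : nat * nat) : bool :=
  [&& 1 <= p.1 <= n, 1 <= p.2 <= n & (p.2%:Z <= cont l p.1 + p.1%:Z)%R].

(* Main.v *)
Require Import Defs.
From mathcomp Require Import all_boot all_order all_algebra.
From mathcomp Require Import zify.
Import Order.TTheory GRing.Theory Num.Theory.

Lemma mem_boxes (l : seq nat) (a b : nat) :
  ((a, b) \in boxes l) = [&& 0 < a, 0 < b & a.-1 < nth 0 l b.-1].
Proof.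
apply/flattenP/idP.
- case=> s /mapP [j]; rewrite mem_iota add0n => Hj -> /mapP [i].
  rewrite mem_iota add0n => Hi [-> ->] /=; exact: Hi.
- case/and3P=> Ha Hb Hab.
  have Hs : b.-1 < size l.
    rewrite ltnNge; apply/negP => H; move: Hab; rewrite nth_default //.
  exists [seq (i.+1, b.-1.+1) | i <- iota 0 (nth 0 l b.-1)].
    by apply/mapP; exists b.-1; rewrite // mem_iota add0n.
  apply/mapP; exists a.-1; first by rewrite mem_iota add0n.
  by rewrite !prednK.
Qed.

Lemma uniq_rows (f : nat -> nat) (m k : nat) :
  uniq (flatten [seq [seq (i.+1, j.+1) | i <- iota 0 (f j)] | j <- iota m k]).
Proof.
elim: k m => [|k IH] m //=.
rewrite cat_uniq IH andbT; apply/andP; split.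
  rewrite map_inj_uniq ?iota_uniq // => x y [] //.
apply/hasP => -[p /flattenP [s /mapP [j]]].
rewrite mem_iota => /andP [Hj _] -> /mapP [i _ ->] /mapP [i' _ [_]] E.
by move: Hj; rewrite E ltnn.
Qed.

Lemma uniq_boxes l : uniq (boxes l).
Proof. exact: uniq_rows. Qed.

Lemma sorted_count (l : seq nat) (k m : nat) :
  sorted geq l -> (k < nth 0 l m) = (m < count (fun p => k < p) l).
Proof.
elim: l m => [|x s IH] m /=; first by rewrite nth_nil.
move=> Hp.
have Hs : sorted geq s by exact: path_sorted Hp.
have Hall : all (geq x) s.
  apply: order_path_min Hp => a b c /= H1 H2; exact: leq_trans H2 H1.
case Hkx: (k < x).
- case: m => [|m] /=; first by rewrite Hkx.
  by rewrite IH // add1n ltnS.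
- have Hc : count (fun p => k < p) s = 0.
    apply/eqP; rewrite -leqn0 leqNgt -has_count; apply/hasP => -[y Hy Hky].
    move/allP: Hall => /(_ y Hy) /= Hyx.
    by move: Hkx; rewrite (leq_trans Hky Hyx).
  rewrite Hc /=; case: m => [|m] /=; first by rewrite Hkx.
  case: (ltnP m (size s)) => Hm; last by rewrite nth_default.
  apply/negbTE; rewrite -leqNgt.
  move/allP: Hall => /(_ _ (mem_nth 0 Hm)) /= H.
  by apply: leq_trans H _; rewrite leqNgt Hkx.
Qed.

Lemma count_head (l : seq nat) k :
  sorted geq l -> 0 < count (fun p => k < p) l -> k < head 0 l.
Proof.
case: l => [|x s] //= Hp.
have Hall : all (geq x) s.
  apply: order_path_min Hp => a b c /= H1 H2; exact: leq_trans H2 H1.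
case Hkx: (k < x) => //= /[!add0n] H.
have /hasP [y Hy Hky] : has (fun p => k < p) s by rewrite has_count.
move/allP: Hall => /(_ y Hy) /= Hyx.
by rewrite (leq_trans Hky Hyx) in Hkx.
Qed.

Lemma boxes_conj l (a b : nat) : sorted geq l ->
  ((a, b) \in boxes (conj_part l)) = ((b, a) \in boxes l).
Proof.
move=> Hs; rewrite !mem_boxes andbCA; congr [&& _, _ & _].
rewrite /conj_part.
case: (ltnP b.-1 (head 0 l)) => Hh.
  by rewrite nth_mkseq // sorted_count.
rewrite nth_default ?size_mkseq // ltn0.
apply/esym/negbTE; rewrite -leqNgt.
case: l Hs Hh => [|x s] //= Hp Hh.
  by rewrite nth_nil.
have Hall : all (geq x) s.
  apply: order_path_min Hp => a' b' c' /= H1 H2; exact: leq_trans H2 H1.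
have Hall' : all (geq x) (x :: s) by rewrite /= leqnn.
case: (ltnP a.-1 (size (x :: s))) => Ha; last by rewrite nth_default.
move/allP: Hall' => /(_ _ (mem_nth 0 Ha)) /= H; exact: leq_trans H Hh.
Qed.

Lemma size_boxes l : size (boxes l) = sumn l.
Proof.
rewrite /boxes size_flatten /shape -map_comp.
rewrite (eq_map (g := nth 0 l)); last by move=> j /=; rewrite size_map size_iota.
by rewrite -/(mkseq _ _) mkseq_nth.
Qed.

Definition geZ := (fun x y : int => (y <= x)%R).

Lemma geZ_trans : transitive geZ.
Proof. move=> a b c /= H1 H2; exact: le_trans H2 H1. Qed.
Lemma geZ_anti : antisymmetric geZ.
Proof. move=> a b /andP [H1 H2]; apply/eqP; rewrite eq_le; apply/andP; split; [exact: H2|exact: H1]. Qed.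
Lemma geZ_total : total geZ.
Proof. move=> a b; exact: le_total. Qed.

Lemma sorted_conj l : sorted geq l ->
  sorted_contents (conj_part l) = map (fun x => - x)%R (rev (sorted_contents l)).
Proof.
move=> Hs; apply: (sorted_eq geZ_trans geZ_anti).
- exact: (sort_sorted geZ_total).
- rewrite sorted_map.
  have := sort_sorted geZ_total [seq content b | b <- boxes l].
  rewrite -rev_sorted /sorted_contents.
  apply: sub_sorted => x y /=; rewrite /geZ lerN2 //.
- rewrite /sorted_contents perm_sort map_rev perm_sym perm_rev perm_sym.
  have Hp : perm_eq (boxes (conj_part l)) [seq (b.2, b.1) | b <- boxes l].
    apply: uniq_perm; first exact: uniq_boxes.
      rewrite map_inj_uniq ?uniq_boxes //; by move=> [x1 y1] [x2 y2] /= [-> ->].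
    move=> [a b]; rewrite boxes_conj //.
    apply/idP/mapP => [H|[[x y] H [-> ->]] //].
    by exists (b, a).
  apply: (perm_trans (perm_map content Hp)).
  rewrite -map_comp perm_sym.
  have -> : [seq (content \o (fun b => (b.2, b.1))) i | i <- boxes l]
      = [seq (fun x => - x)%R i | i <- [seq content b | b <- boxes l]].
    rewrite -map_comp; apply/eq_map => -[x y] /=.
    rewrite /content /=; lia.
  apply: perm_map; exact: permEl (perm_sort _ _).
Qed.

Theorem mainTheorem1 (n : nat) (l : seq nat) :
  is_partition n l ->
  forall i j : nat,
    in_board n (conj_part l) (i, j) =
    [&& 1 <= i <= n, 1 <= j <= n & ~~ in_board_x1 n l (n.+1 - i, n.+1 - j)].
Proof.
case/and3P=> Hs _ /eqP Hn i j.
rewrite /in_board /in_board_x1 /=.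
case Hi: (1 <= i <= n) => //=.
case Hj: (1 <= j <= n) => //=.
have -> : (1 <= n.+1 - i <= n) by lia.
have -> : (1 <= n.+1 - j <= n) by lia.
rewrite /= /cont sorted_conj //.
have Hsz : size (sorted_contents l) = n.
  by rewrite /sorted_contents size_sort size_map size_boxes.
rewrite (nth_map 0%R); last by rewrite size_rev Hsz; lia.
rewrite nth_rev; last by rewrite Hsz; lia.
rewrite Hsz.
have -> : (n - i.-1.+1 = (n.+1 - i).-1)%N by lia.
set c := nth _ _ _.
apply/idP/idP => H.
- rewrite -ltNge; rewrite -(@ltr_nat int) in Hi; lia.
- rewrite -ltNge in H; lia.
Qed.
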